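(* Let $\mathbb A\in\mathcal K$ and $\theta$ a congruence of $\mathbb A$. (1) If $\bar a\in\mathbb A/\theta$ is maximal (respectively as-maximal, u-maximal) in $\mathbb A/\theta$, then there is $a\in\bar a$ that is maximal (respectively as-maximal, u-maximal) in $\mathbb A$. (2) If $a$ is maximal (respectively as-maximal, u-maximal) in $\mathbb A$, then $a/\theta$ is maximal (respectively as-maximal, u-maximal) in $\mathbb A/\theta$.
   Context: All algebras are finite and idempotent; $\mathrm{Sg}(B)$ denotes the subalgebra generated by a set $B$. Edges: for elements $a,b$ of an algebra $\mathbb A$ let $\mathbb B=\mathrm{Sg}(a,b)$. The pair $ab$ is an edge if there is a maximal congruence $\theta$ of $\mathbb B$ such that either $\mathbb B/\theta$ is a set (unary type), or $\mathbb B/\theta$ is term equivalent to the full idempotent reduct of a module and some term operation $f$ induces on $\mathbb B/\theta$ the affine operation $x-y+z$ (affine type), or some term operation $f$ with $f/\theta$ a semilattice operation on $\{a/\theta,b/\theta\}$, or one with $f/\theta$ a majority operation on $\{a/\theta,b/\theta\}$. Semilattice type: the semilattice option holds for some $\theta$; majority type: not semilattice type and the majority option holds for some $\theta$; $\{a/\theta,b/\theta\}$ is a thick edge. $\mathbb A$ is smooth if for every edge $ab$ of semilattice or majority type with witness $\theta$, $a/\theta\cup b/\theta$ is a subalgebra. Standing assumption: $\mathcal K$ is a fixed finite class of similar smooth idempotent algebras, closed under subalgebras and homomorphic images, with no edges of unary type; all notions below are taken with respect to $\mathcal K$. Fixed binary term $\cdot$: semilattice operation on every thick semilattice edge of every algebra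 in $\mathcal K$, and for all $a,b$ either $a\cdot b=a$ or $(a,a\cdot b)$ is a thin semilattice edge. A thin semilattice edge is a pair $ab$ with $a\cdot b=b\cdot a=b$. A ternary term $g'$ satisfies the majority condition if $g'(x,g'(x,y,y),g'(x,y,y))=g'(x,y,y)$ in $\mathcal K$ and $g'$ is a majority operation on every thick majority edge of every algebra in $\mathcal K$. A ternary term $h'$ satisfies the minority condition if $h'(h'(x,y,y),y,y)=h'(x,y,y)$ in $\mathcal K$ and $h'$ induces the affine operation on $\mathrm{Sg}(a,b)/\theta$ for every affine edge $ab$ with witness $\theta$; such an $h$ is fixed. A (directed) pair $ab$ is a thin majority edge if for every $g'$ satisfying the majority condition each of $\mathrm{Sg}(a,g'(a,b,b))$, $\mathrm{Sg}(a,g'(b,a,b))$, $\mathrm{Sg}(a,g'(b,b,a))$ contains $b$. A pair $ab$ is a thin affine edge if $h(b,a,a)=b$ and $b\in\mathrm{Sg}(a,h'(a,a,b))$ for every $h'$ satisfying the minority condition. A path is a sequence $a_0,\dots,a_k$ where each $a_{i-1}a_i$ is a thin edge; it is an s-path if all are thin semilattice edges, an as-path if all are thin semilattice or thin affine edges, an asm-path in general. $a\sqsubseteq b$, $a\sqsubseteq^{as}b$, $a\sqsubseteq^{asm}b$ mean there is an s-, as-, asm-path from $a$ to $b$ in the algebra considered. $a$ is maximal (as-maximal, u-maximal) if $a\sqsubseteq b$ implies $b\sqsubseteq a$ (resp. the same with $\sqsubseteq^{as}$, $\sqsubseteq^{asm}$). *)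

(* Defs.v *)
From HB Require Import structures.
From mathcomp Require Import all_boot all_algebra.
Set Implicit Arguments. Unset Strict Implicit. Unset Printing Implicit Defensive.
Import GRing.Theory.

Record signature := Signature { sym : finType; arity : sym -> nat }.

Record algebra (S : signature) := Algebra {
  carrier :> finType;
  op : forall f : sym S, {ffun 'I_(arity f) -> carrier} -> carrier }.
Arguments op {S} a f _ : rename.

Definition idempotent S (A : algebra S) :=
  forall (f : sym S) (x : A), op A f [ffun=> x] = x.

Definition alg_hom S (A B : algebra S) (h : A -> B) :=
  forall (f : sym S) (u : {ffun 'I_(arity f) -> A}),
    h (op A f u) = op B f [ffun i => h (u i)].

Definition iso S (A B : algebra S) := exists h : A -> B, alg_hom h /\ bijective h.

Inductive term (S : signature) : Type :=
| Var of nat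
| App (f : sym S) of ('I_(arity f) -> term S).
Arguments Var {S} _.

Fixpoint eval S (A : algebra S) (e : nat -> A) (t : term S) {struct t} : A :=
  match t with
  | Var i => e i
  | App f args => op A f [ffun j => @eval S A e (args j)]
  end.

Arguments eval {S} A e t.

Fixpoint vars_lt S (n : nat) (t : term S) {struct t} : Prop :=
  match t with
  | Var i => (i < n)%N
  | App f args => forall j, vars_lt n (args j)
  end.

Definition bin S (A : algebra S) (t : term S) (x y : A) : A :=
  eval A (fun i => if i is 0 then x else y) t.
Definition ter S (A : algebra S) (t : term S) (x y z : A) : A :=
  eval A (fun i => match i with 0 => x | 1 => y | _ => z end) t.

Arguments bin {S} A t x y.
Arguments ter {S} A t x y z.

Definition closed S (A : algebra S) (P : A -> Prop) :=
  forall (f : sym S) (u : {ffun 'I_(arity f) -> A}),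
    (forall i, P (u i)) -> P (op A f u).

Definition in_Sg S (A : algebra S) (X : A -> Prop) (x : A) : Prop :=
  forall C : A -> Prop, (forall y, X y -> C y) -> closed C -> C x.

Definition in2 (T : Type) (a b x : T) : Prop := x = a \/ x = b.

Definition sg2 S (A : algebra S) (a b : A) : A -> Prop := in_Sg (in2 a b).

(* th is a congruence of the subalgebra P of A (only its values on P matter) *)
Definition cong_on S (A : algebra S) (P : A -> Prop) (th : A -> A -> Prop) :=
  [/\ forall x, P x -> th x x,
      forall x y, P x -> P y -> th x y -> th y x,
      forall x y z, P x -> P y -> P z -> th x y -> th y z -> th x z &
      forall (f : sym S) (u v : {ffun 'I_(arity f) -> A}),
        (forall i, P (u i)) -> (forall i, P (v i)) ->
        (forall i, th (u i) (v i)) -> th (op A f u) (op A f v)].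

Definition proper_on S (A : algebra S) (P : A -> Prop) (th : A -> A -> Prop) :=
  exists x y, [/\ P x, P y & ~ th x y].

Definition maxcong_on S (A : algebra S) (P : A -> Prop) (th : A -> A -> Prop) :=
  [/\ cong_on P th, proper_on P th &
      forall th' : A -> A -> Prop, cong_on P th' -> proper_on P th' ->
        (forall x y, P x -> P y -> th x y -> th' x y) ->
        (forall x y, P x -> P y -> th' x y -> th x y)].

(* B/th is a set: every basic operation of B/th is a projection *)
Definition unary_opt S (A : algebra S) (a b : A) (th : A -> A -> Prop) :=
  forall f : sym S, exists i : 'I_(arity f),
    forall u : {ffun 'I_(arity f) -> A}, (forall j, sg2 a b (u j)) ->
      th (op A f u) (u i).

Definition semilattice_on S (A : algebra S) (th : A -> A -> Prop)
    (g : A -> A -> A) (a b : A) :=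
  forall x y z, in2 a b x -> in2 a b y -> in2 a b z ->
    [/\ th (g x y) a \/ th (g x y) b, th (g x x) x, th (g x y) (g y x) &
        th (g (g x y) z) (g x (g y z))].

Definition majority_on S (A : algebra S) (th : A -> A -> Prop)
    (m : A -> A -> A -> A) (a b : A) :=
  forall x y, in2 a b x -> in2 a b y ->
    [/\ th (m x x y) x, th (m x y x) x & th (m y x x) x].

(* P/th is term equivalent, via the bijection induced by phi : P/th -> M,
   to the full idempotent reduct of the R-module M: its n-ary term operations
   are exactly the maps x |-> sum_i r_i x_i with sum_i r_i = 1. *)
Definition module_equiv S (A : algebra S) (P : A -> Prop) (th : A -> A -> Prop)
    (R : nzRingType) (M : lmodType R) (phi : A -> M) :=
  [/\ forall x y, P x -> P y -> (phi x = phi y <-> th x y),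
      forall m : M, exists x, P x /\ phi x = m,
      forall (n : nat) (t : term S), vars_lt n t ->
        exists r : 'I_n -> R, (\sum_(i < n) r i = 1)%R /\
          forall e : nat -> A, (forall i, P (e i)) ->
            phi (eval A e t) = (\sum_(i < n) r i *: phi (e i))%R &
      forall (n : nat) (r : 'I_n -> R), (\sum_(i < n) r i = 1)%R ->
        exists t : term S, vars_lt n t /\
          forall e : nat -> A, (forall i, P (e i)) ->
            phi (eval A e t) = (\sum_(i < n) r i *: phi (e i))%R].

Definition affine_opt S (A : algebra S) (a b : A) (th : A -> A -> Prop) :=
  exists (R : nzRingType) (M : lmodType R) (phi : A -> M),
    module_equiv (sg2 a b) th phi /\
    exists t : term S, forall x y z, sg2 a b x -> sg2 a b y -> sg2 a b z ->
      phi (ter A t x y z) = (phi x - phi y + phi z)%R.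

Definition un_wit S (A : algebra S) (a b : A) th :=
  maxcong_on (sg2 a b) th /\ unary_opt a b th.
Definition sl_wit S (A : algebra S) (a b : A) th :=
  maxcong_on (sg2 a b) th /\ exists t : term S, semilattice_on th (bin A t) a b.
Definition mj_wit S (A : algebra S) (a b : A) th :=
  maxcong_on (sg2 a b) th /\ exists t : term S, majority_on th (ter A t) a b.
Definition af_wit S (A : algebra S) (a b : A) th :=
  maxcong_on (sg2 a b) th /\ affine_opt a b th.

Definition un_type S (A : algebra S) (a b : A) := exists th, un_wit a b th.
Definition sl_type S (A : algebra S) (a b : A) := exists th, sl_wit a b th.
Definition mj_type S (A : algebra S) (a b : A) :=
  ~ sl_type a b /\ exists th, mj_wit a b th.

Definition smooth S (A : algebra S) :=
  forall (a b : A) (th : A -> A -> Prop),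
    sl_wit a b th \/ (mj_type a b /\ mj_wit a b th) ->
    closed (fun x => sg2 a b x /\ (th x a \/ th x b)).

Definition std_class S (K : algebra S -> Prop) :=
  [/\
      exists (n : nat) (F : 'I_n -> algebra S),
        forall A, K A -> exists i, iso A (F i),
      forall A, K A -> idempotent A /\ smooth A,
      forall (A B : algebra S) (h : B -> A), K A -> alg_hom h -> injective h -> K B,
      forall (A B : algebra S) (h : A -> B), K A -> alg_hom h ->
        (forall y, exists x, h x = y) -> K B &
      forall A, K A -> forall a b : A, ~ un_type a b].

Definition thin_sl S (A : algebra S) (dot : term S) (a b : A) :=
  bin A dot a b = b /\ bin A dot b a = b.

Definition dot_cond S (K : algebra S -> Prop) (dot : term S) :=
  (forall A, K A -> forall (a b : A) th, sl_wit a b th ->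
      semilattice_on th (bin A dot) a b) /\
  (forall A, K A -> forall a b : A,
      bin A dot a b = a \/ thin_sl dot a (bin A dot a b)).

Definition majority_cond S (K : algebra S -> Prop) (g : term S) :=
  forall A, K A ->
    (forall x y : A, ter A g x (ter A g x y y) (ter A g x y y) = ter A g x y y) /\
    (forall (a b : A) th, mj_type a b -> mj_wit a b th ->
        majority_on th (ter A g) a b).

Definition induces_affine S (A : algebra S) (h : term S) (a b : A) th :=
  forall (R : nzRingType) (M : lmodType R) (phi : A -> M),
    module_equiv (sg2 a b) th phi ->
    forall x y z, sg2 a b x -> sg2 a b y -> sg2 a b z ->
      phi (ter A h x y z) = (phi x - phi y + phi z)%R.

Definition minority_cond S (K : algebra S -> Prop) (h : term S) :=
  forall A, K A ->
    (forall x y : A, ter A h (ter A h x y y) y y = ter A h x y y) /\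
    (forall (a b : A) th, af_wit a b th -> induces_affine h a b th).

Definition thin_mj S (K : algebra S -> Prop) (A : algebra S) (a b : A) :=
  forall g : term S, majority_cond K g ->
    [/\ in_Sg (in2 a (ter A g a b b)) b,
        in_Sg (in2 a (ter A g b a b)) b &
        in_Sg (in2 a (ter A g b b a)) b].

Definition thin_af S (K : algebra S -> Prop) (h : term S) (A : algebra S) (a b : A) :=
  ter A h b a a = b /\
  forall h' : term S, minority_cond K h' -> in_Sg (in2 a (ter A h' a a b)) b.

Inductive kind := Ks | Kas | Kasm.

Definition thin_edge S (K : algebra S -> Prop) (dot h : term S) (k : kind)
    (A : algebra S) (a b : A) : Prop :=
  match k with
  | Ks => thin_sl dot a b
  | Kas => thin_sl dot a b \/ thin_af K h a b
  | Kasm => [\/ thin_sl dot a b, thin_mj K a b | thin_af K h a b]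
  end.

Arguments thin_edge {S} K dot h k A a b.

Inductive reach (T : Type) (R : T -> T -> Prop) : T -> T -> Prop :=
| reach0 x : reach R x x
| reachS x y z : R x y -> reach R y z -> reach R x z.

(* Ks: maximal; Kas: as-maximal; Kasm: u-maximal *)
Definition maximal S (K : algebra S -> Prop) (dot h : term S) (k : kind)
    (A : algebra S) (a : A) :=
  forall b : A, reach (thin_edge K dot h k A) a b ->
                reach (thin_edge K dot h k A) b a.
Arguments maximal {S} K dot h k A a.

(* Main.v *)
Require Import Defs.
From mathcomp Require Import all_boot all_algebra.
From Stdlib Require Import Classical ClassicalDescription.
Set Implicit Arguments. Unset Strict Implicit.

Section Gen.
Variable S : signature.

Lemma eval_hom (A B : algebra S) (p : A -> B) (Hp : alg_hom p) :
  forall (t : term S) e e', (forall i, p (e i) = e' i) ->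
  p (eval A e t) = eval B e' t.
Proof.
fix IH 1; intros [i|f args] e e' He; simpl.
- apply He.
- rewrite Hp; congr (op B f _); apply/ffunP => j; rewrite !ffunE.
  by apply IH.
Qed.

Lemma eval_closed (A : algebra S) (C : A -> Prop) (HC : Defs.closed C) :
  forall (t : term S) e, (forall i, C (e i)) -> C (eval A e t).
Proof.
fix IH 1; intros [i|f args] e He; simpl.
- apply He.
- apply HC => j; rewrite ffunE; by apply IH.
Qed.

Lemma Sg_closed (A : algebra S) X : Defs.closed (@in_Sg S A X).
Proof. move=> f u Hu C HX HC; apply HC => i; exact: Hu. Qed.

Lemma Sg_gen (A : algebra S) (X : A -> Prop) x : X x -> in_Sg X x.
Proof. by move=> Hx C HX _; apply HX. Qed.

Lemma Sg_l (A : algebra S) (a b : A) : in_Sg (in2 a b) a.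
Proof. apply Sg_gen; by left. Qed.
Lemma Sg_r (A : algebra S) (a b : A) : in_Sg (in2 a b) b.
Proof. apply Sg_gen; by right. Qed.

Lemma Sg_sub (A : algebra S) (a c x y : A) :
  in_Sg (in2 a c) x -> in_Sg (in2 a x) y -> in_Sg (in2 a c) y.
Proof. move=> Hx Hy; apply Hy; last exact: Sg_closed.
move=> z [->|->] //; exact: Sg_l. Qed.

Lemma ter_Sg (A : algebra S) t (a b x y z : A) :
  in_Sg (in2 a b) x -> in_Sg (in2 a b) y -> in_Sg (in2 a b) z ->
  in_Sg (in2 a b) (ter A t x y z).
Proof. move=> Hx Hy Hz; apply: eval_closed; first exact: Sg_closed.
by case=> [|[|i]]. Qed.

Variables (A Q : algebra S) (pi : A -> Q) (Hpi : alg_hom pi).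

Lemma ter_hom t x y z : pi (ter A t x y z) = ter Q t (pi x) (pi y) (pi z).
Proof. apply: eval_hom => //; by case=> [|[|i]]. Qed.
Lemma bin_hom t x y : pi (bin A t x y) = bin Q t (pi x) (pi y).
Proof. apply: eval_hom => //; by case=> [|i]. Qed.

Lemma Sg_img (X : A -> Prop) x : in_Sg X x -> in_Sg (fun y => exists x, X x /\ pi x = y) (pi x).
Proof. move=> Hx; apply: (Hx (fun x => in_Sg _ (pi x))).
- move=> y Hy; apply Sg_gen; by exists y.
- move=> f u Hu; rewrite Hpi; apply: Sg_closed => i; rewrite ffunE; exact: Hu.
Qed.

Lemma Sg_img2 (a c x : A) : in_Sg (in2 a c) x -> in_Sg (in2 (pi a) (pi c)) (pi x).
Proof. move=> /Sg_img H; apply H; last exact: Sg_closed.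
move=> y [z [[->|->] <-]]; [exact: Sg_l|exact: Sg_r]. Qed.

Lemma Sg_pre (a c : A) y : in_Sg (in2 (pi a) (pi c)) y ->
  exists x, in_Sg (in2 a c) x /\ pi x = y.
Proof. move=> Hy; apply: (Hy (fun y => exists x, in_Sg (in2 a c) x /\ pi x = y)).
- move=> z [->|->]; [exists a; split=> //; exact: Sg_l|exists c; split=>//; exact: Sg_r].
- move=> f u Hu.
  have [v Hv] := fin_all_exists Hu.
  exists (op A f [ffun i => v i]); split.
  + apply: Sg_closed => i; rewrite ffunE; exact: (Hv i).1.
  + rewrite Hpi; congr (op Q f _); apply/ffunP => i; rewrite !ffunE; exact: (Hv i).2.
Qed.

Definition pb (P : Prop) : bool := if excluded_middle_informative P then true else false.
Lemma pbP P : pb P <-> P.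
Proof. rewrite /pb; case: excluded_middle_informative => //. Qed.

Definition Min (a : A) (y : Q) (b : A) := forall c, pi c = y ->
  (forall x, in_Sg (in2 a c) x -> in_Sg (in2 a b) x) -> in_Sg (in2 a c) b.

Lemma min_ex (a b0 : A) : exists b, pi b = pi b0 /\ Min a (pi b0) b.
Proof.
set y := pi b0.
pose SG (b : A) := [set x | pb (in_Sg (in2 a b) x)].
suff H : forall n b, pi b = y -> #|SG b| < n -> exists b, pi b = y /\ Min a y b.
  exact: (H _ b0 erefl (ltnSn _)).
elim=> [//|n IH] b Hb Hn.
case: (classic (Min a y b)) => Hm; first by exists b.
move: Hm => /not_all_ex_not [c Hc].
have Hc1 : pi c = y by apply: NNPP => H0; apply: (Hc) => /H0.
have Hc2 : forall x, in_Sg (in2 a c) x -> in_Sg (in2 a b) x.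
  by apply: NNPP => H0; apply: (Hc) => _ /H0.
have Hc3 : ~ in_Sg (in2 a c) b by move=> H; apply: (Hc).
apply: (IH c Hc1); rewrite -ltnS; apply: (leq_trans _ Hn); rewrite ltnS; apply: proper_card.
apply/properP; split.
- apply/subsetP => x; rewrite !inE => /pbP /Hc2 /pbP //.
- exists b; rewrite !inE; first by apply/pbP; exact: Sg_r.
  by apply/negP => /pbP.
Qed.

Lemma use_min a y b c : Min a y b -> in_Sg (in2 a b) c ->
  in_Sg (in2 (pi a) (pi c)) y -> in_Sg (in2 a c) b.
Proof.
move=> Hm Hc /Sg_pre [x [Hx Hpx]].
have : in_Sg (in2 a x) b.
  apply: (Hm x Hpx) => z Hz; exact: (Sg_sub Hc (Sg_sub Hx Hz)).
exact: Sg_sub.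
Qed.

Lemma min_h (hh : term S) a y b :
  Min a y b -> pi (ter A hh b a a) = y -> Min a y (ter A hh b a a).
Proof.
move=> Hm Hp c Hc Hsub.
have Hb1 : in_Sg (in2 a b) (ter A hh b a a) by apply: ter_Sg; [exact: Sg_r|exact: Sg_l|exact: Sg_l].
have Hbc : in_Sg (in2 a c) b.
  apply: Hm => // x /Hsub Hx; exact: (Sg_sub Hb1).
have Hsub2 : forall x, in_Sg (in2 a b) x -> in_Sg (in2 a c) x by move=> x; apply: Sg_sub.
exact: Hsub2.
Qed.

End Gen.

Inductive dummy := Dummy.

Lemma reach_trans (T : Type) (R : T -> T -> Prop) x y z :
  reach R x y -> reach R y z -> reach R x z.
Proof. elim=> // x0 y0 z0 H _ IH Hz; apply: reachS H (IH Hz). Qed.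

Lemma reach_map (T U : Type) (R : T -> T -> Prop) (R' : U -> U -> Prop) (f : T -> U) :
  (forall x y, R x y -> R' (f x) (f y)) -> forall x y, reach R x y -> reach R' (f x) (f y).
Proof. move=> Hf x0 y0; elim=> [x|x y z H _ IH]; [exact: reach0|exact: reachS (Hf _ _ H) IH]. Qed.

Lemma reach_max (T : finType) (R : T -> T -> Prop) (x : T) :
  exists y, reach R x y /\ forall z, reach R y z -> reach R z y.
Proof.
pose RS (x : T) := [set z | pb (reach R x z)].
suff H : forall n x, #|RS x| < n -> exists y, reach R x y /\ forall z, reach R y z -> reach R z y.
  exact: (H _ x (ltnSn _)).
elim=> [//|n IH] {}x Hn.
case: (classic (forall z, reach R x z -> reach R z x)) => Hm.
  by exists x; split=> //; exact: reach0.
move: Hm => /not_all_ex_not [z Hz].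
have Hz1 : reach R x z by apply: NNPP => H0; apply: (Hz) => /H0.
have Hz2 : ~ reach R z x by move=> H; apply: (Hz).
have [y [Hy1 Hy2]] : exists y, reach R z y /\ forall w, reach R y w -> reach R w y.
  apply: IH; rewrite -ltnS; apply: (leq_trans _ Hn); rewrite ltnS; apply: proper_card; apply/properP; split.
  - apply/subsetP => w; rewrite !inE => /pbP Hw; apply/pbP; exact: reach_trans Hz1 Hw.
  - exists x; rewrite !inE; first by apply/pbP; exact: reach0.
    by apply/negP => /pbP.
exists y; split=> //; exact: reach_trans Hz1 Hy1.
Qed.

Section Main.
Variables (S : signature) (K : algebra S -> Prop) (dot h : term S).
Variables (A Q : algebra S) (pi : A -> Q) (Hpi : alg_hom pi).
Hypothesis Hsurj : forall q : Q, exists a : A, pi a = q.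
Hypothesis Hdot2 : forall a b : A, bin A dot a b = a \/ thin_sl dot a (bin A dot a b).
Hypothesis HhA : forall x y : A, ter A h (ter A h x y y) y y = ter A h x y y.

Lemma edge_proj k (a b : A) : thin_edge K dot h k A a b -> thin_edge K dot h k Q (pi a) (pi b).
Proof.
have Hsl : thin_sl dot a b -> thin_sl dot (pi a) (pi b).
  by case=> H1 H2; split; rewrite -(bin_hom Hpi) ?H1 ?H2.
have Hmj : thin_mj K a b -> thin_mj K (pi a) (pi b).
  move=> H g Hg; case: (H g Hg) => H1 H2 H3.
  by split; rewrite -(ter_hom Hpi); apply: (Sg_img2 Hpi).
have Haf : thin_af K h a b -> thin_af K h (pi a) (pi b).
  case=> H1 H2; split; first by rewrite -(ter_hom Hpi) H1.
  by move=> h' Hh'; rewrite -(ter_hom Hpi); apply: (Sg_img2 Hpi); apply: H2.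
case: k => /=; first exact: Hsl.
- by case=> H; [left; exact: Hsl|right; exact: Haf].
- by case=> H; [apply: Or31; exact: Hsl|apply: Or32; exact: Hmj|apply: Or33; exact: Haf].
Qed.

Lemma lift_sl (a : A) y : thin_sl dot (pi a) y -> exists b, pi b = y /\ (b = a \/ thin_sl dot a b).
Proof.
case=> H1 _; have [b0 Hb0] := Hsurj y.
have Hp : pi (bin A dot a b0) = y by rewrite (bin_hom Hpi) Hb0.
case: (Hdot2 a b0) => H.
- exists a; split; [by rewrite -H|by left].
- by exists (bin A dot a b0); split=> //; right.
Qed.

Lemma lift_mj (a : A) y : thin_mj K (pi a) y -> exists b, pi b = y /\ thin_mj K a b.
Proof.
move=> H; have [b0 Hb0] := Hsurj y.
have [b [Hb Hm]] := min_ex pi a b0; rewrite Hb0 in Hb Hm.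
exists b; split=> // g Hg; case: (H g Hg) => H1 H2 H3.
have key := use_min Hpi Hm.
have Sl := @Sg_l _ A a b; have Sr := @Sg_r _ A a b.
split; [apply (key (ter A g a b b))|apply (key (ter A g b a b))|apply (key (ter A g b b a))];
  rewrite ?(ter_hom Hpi) ?Hb //; by apply: ter_Sg.
Qed.

Lemma lift_af (a : A) y : thin_af K h (pi a) y -> exists b, pi b = y /\ thin_af K h a b.
Proof.
case=> H0 H; have [b0 Hb0] := Hsurj y.
have [b [Hb Hm]] := min_ex pi a b0; rewrite Hb0 in Hb Hm.
have Hp1 : pi (ter A h b a a) = y by rewrite (ter_hom Hpi) Hb.
have Hm1 := min_h Hm Hp1.
exists (ter A h b a a); split=> //; split; first exact: HhA.
move=> h' Hh'; apply: (use_min Hpi Hm1); first by apply: ter_Sg; (exact: Sg_l || exact: Sg_r).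
by rewrite (ter_hom Hpi) Hp1; apply: H.
Qed.

Lemma edge_lift k (a : A) y : thin_edge K dot h k Q (pi a) y ->
  exists b, pi b = y /\ reach (thin_edge K dot h k A) a b.
Proof.
have Hs : forall (E : A -> A -> Prop), (forall a b, thin_sl dot a b -> E a b) ->
    thin_sl dot (pi a) y -> exists b, pi b = y /\ reach E a b.
  move=> E HE /lift_sl [b [Hb [Hba|Hab]]]; exists b; split=> //; first by rewrite Hba; exact: reach0.
  exact: reachS (HE _ _ Hab) (reach0 _ _).
have Hg : forall (E : A -> A -> Prop) (P : A -> Prop), (forall b, P b -> E a b) ->
    (exists b, pi b = y /\ P b) -> exists b, pi b = y /\ reach E a b.
  move=> E P HE [b [Hb Pb]]; exists b; split=> //; exact: reachS (HE _ Pb) (reach0 _ _).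
case: k => /=.
- by apply: Hs.
- case=> H; first by apply: Hs => // ? ? ?; left.
  by apply: (Hg _ (thin_af K h a)); [move=> ? ?; right|exact: lift_af].
- case=> H; first by apply: Hs => // ? ? ?; apply: Or31.
  + by apply: (Hg _ (thin_mj K a)); [move=> ? ?; apply: Or32|exact: lift_mj].
  + by apply: (Hg _ (thin_af K h a)); [move=> ? ?; apply: Or33|exact: lift_af].
Qed.

Lemma path_lift k (x y : Q) : reach (thin_edge K dot h k Q) x y ->
  forall a, pi a = x -> exists b, pi b = y /\ reach (thin_edge K dot h k A) a b.
Proof.
elim=> [x0 a <-|x0 y0 z0 H _ IH a Ha].
- by exists a; split=> //; exact: reach0.
- rewrite -Ha in H; have [b1 [Hb1 Hr1]] := edge_lift H.
  have [b [Hb Hr]] := IH b1 Hb1; exists b; split=> //; exact: reach_trans Hr1 Hr.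
Qed.

Lemma path_proj k (a b : A) : reach (thin_edge K dot h k A) a b ->
  reach (thin_edge K dot h k Q) (pi a) (pi b).
Proof. apply: reach_map => x z; exact: edge_proj. Qed.

End Main.

Unset Implicit Arguments.

Theorem corollary15 (S : signature) (K : algebra S -> Prop) (dot h : term S)
  (HK : std_class K) (Hdot : dot_cond K dot) (Hh : minority_cond K h)
  (A : algebra S) (HA : K A)
  (theta : A -> A -> Prop) (Htheta : cong_on (fun _ => True) theta)
  (Q : algebra S) (pi : A -> Q) (Hpi : alg_hom pi)
  (Hsurj : forall q : Q, exists a : A, pi a = q)
  (Hker : forall x y : A, pi x = pi y <-> theta x y) :
  forall k : kind,
    (forall abar : Q, maximal K dot h k Q abar ->
       exists a : A, pi a = abar /\ maximal K dot h k A a) /\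
    (forall a : A, maximal K dot h k A a -> maximal K dot h k Q (pi a)).
Proof.
move=> k.
have Hdot2 := Hdot.2 A HA.
have HhA := (Hh A HA).1.
split.
- move=> abar Hmax; have [a0 Ha0] := Hsurj abar.
  have [b [Hb1 Hb2]] := reach_max (thin_edge K dot h k A) a0.
  have Hq : reach (thin_edge K dot h k Q) abar (pi b) by rewrite -Ha0; exact: path_proj.
  have [c [Hc Hbc]] := path_lift Hpi Hsurj Hdot2 HhA (Hmax _ Hq) (erefl (pi b)).
  exists c; split=> // z Hz.
  exact: reach_trans (Hb2 _ (reach_trans Hbc Hz)) Hbc.
- move=> a Hmax y Hy.
  have [b [Hb Hab]] := path_lift Hpi Hsurj Hdot2 HhA Hy (erefl (pi a)).
  rewrite -Hb; exact: path_proj (Hmax _ Hab).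
Qed.
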